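(* Let $R$ be a non-associative ring with pairwise commuting additive bijections $\sigma_1,\ldots,\sigma_n$ respecting $1$. If $R$ is left (right) Noetherian, then so is $R[X_1^\pm,\ldots,X_n^\pm;\sigma_1,\ldots,\sigma_n]$.
   Context: All rings are unital; a non-associative ring is a ring that is not necessarily associative. Left (right) Noetherian means satisfying the ascending chain condition on left (right) ideals. For a non-associative ring $R$ and an additive bijection $\sigma$ of $R$ with $\sigma(1)=1$, the non-associative skew Laurent polynomial ring $R[X^\pm;\sigma]$ is the additive group of finite formal sums $\sum_{i\in\mathbb{Z}} r_iX^i$ ($r_i\in R$) with multiplication given by the biadditive extension of $(rX^m)(sX^n)=(r\sigma^m(s))X^{m+n}$ for $r,s\in R$, $m,n\in\mathbb{Z}$. Given pairwise commuting additive bijections $\sigma_1,\ldots,\sigma_n$ of $R$ respecting $1$, the iterated ring $R[X_1^\pm,\ldots,X_n^\pm;\sigma_1,\ldots,\sigma_n]$ is constructed as follows: set $S_1 := R[X_1^\pm;\sigma_1]$; once $S_i$ is constructed for $i<n$, set $S_{i+1}:=S_i[X_{i+1}^\pm;\widehat{\sigma}_{i+1}]$, where $\widehat{\sigma}_{i+1}$ is the additive bijection on $S_i$ (respecting $1$) defined by $\widehat{\sigma}_{i+1}(rX_1^{m_1}\cdots X_i^{m_i})=\sigma_{i+1}(r)X_1^{m_1}\cdots X_i^{m_i}$. The resulting ring $S_n = R[X_1^\pm;\sigma_1]\cdots[X_n^\pm;\widehat{\sigma}_n]$ is denoted $R[X_1^\pm,\ldots,X_n^\pm;\sigma_1,\ldots,\sigma_n]$.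 *)

(* Defs.v *)
From HB Require Import structures.
From mathcomp Require Import all_boot all_order all_algebra.
From mathcomp Require Import finmap.
From mathcomp.multinomials Require Import monalg.
From Stdlib Require Import ClassicalEpsilon.

Set Implicit Arguments.
Unset Strict Implicit.
Unset Printing Implicit Defensive.

Import GRing.Theory.
Local Open Scope ring_scope.

Record naring := NARing {
  nacar :> zmodType;
  namul : nacar -> nacar -> nacar;
  naone : nacar }.

Definition is_naring (R : naring) : Prop :=
  [/\ (forall x y z : R, namul x (y + z) = namul x y + namul x z),
      (forall x y z : R, namul (x + y) z = namul x z + namul y z),
      (forall x : R, namul (naone R) x = x) &
      (forall x : R, namul x (naone R) = x)].

Definition additive_subgroup (R : naring) (I : R -> Prop) : Prop :=
  [/\ I 0, (forall x y, I x -> I y -> I (x + y)) & (forall x, I x -> I (- x))].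

Definition left_ideal (R : naring) (I : R -> Prop) : Prop :=
  additive_subgroup I /\ (forall r x, I x -> I (namul r x)).

Definition right_ideal (R : naring) (I : R -> Prop) : Prop :=
  additive_subgroup I /\ (forall r x, I x -> I (namul x r)).

Definition left_noetherian (R : naring) : Prop :=
  forall I : nat -> R -> Prop,
    (forall k, left_ideal (I k)) ->
    (forall k x, I k x -> I k.+1 x) ->
    exists N, forall k, (N <= k)%N -> forall x, I k x -> I N x.

Definition right_noetherian (R : naring) : Prop :=
  forall I : nat -> R -> Prop,
    (forall k, right_ideal (I k)) ->
    (forall k x, I k x -> I k.+1 x) ->
    exists N, forall k, (N <= k)%N -> forall x, I k x -> I N x.

(* Inverse of a map (it is the inverse whenever the map is bijective). *)
Definition finv (T : Type) (f : T -> T) (y : T) : T :=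
  epsilon (inhabits y) (fun x => f x = y).

Definition zpow (T : Type) (f : T -> T) (m : int) : T -> T :=
  match m with
  | Posz k => iter k f
  | Negz k => iter k.+1 (finv f)
  end.

(* Non-associative skew Laurent polynomial ring R[X^{+-}; sigma]:
   finitely supported functions int -> R, i.e. finite sums  sum_i r_i X^i,
   with (r X^m)(s X^n) = (r sigma^m(s)) X^(m+n) extended biadditively. *)
Definition laurent_car (R : naring) : zmodType := {malg R[int]}.

Definition laurent_mul (R : naring) (sigma : R -> R)
    (f g : laurent_car R) : laurent_car R :=
  \sum_(i <- msupp f) \sum_(j <- msupp g)
     mkmalgU (i + j)%R (namul (f@_i) (zpow sigma i (g@_j))).

Definition laurent (R : naring) (sigma : R -> R) : naring :=
  @NARing (laurent_car R) (laurent_mul sigma) (mkmalgU (0%R : int) (naone R)).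

Definition coefmap (R : naring) (h : R -> R) (f : laurent_car R) : laurent_car R :=
  \sum_(i <- msupp f) mkmalgU i (h (f@_i)).

(* Iterated construction. [S] is the ring built so far, [lift] sends an
   additive map sigma of the base ring R to its extension sigma-hat on S
   (acting on the base coefficients r of r X_1^m_1 ... X_i^m_i). *)
Fixpoint tower (R : naring) (S : naring) (lift : (R -> R) -> S -> S)
    (s : seq (R -> R)) : naring :=
  match s with
  | [::] => S
  | sigma :: s' =>
      @tower R (laurent (lift sigma))
        (fun h => coefmap (lift h)) s'
  end.

Definition iterated_laurent (R : naring) (n : nat) (sigma : 'I_n -> R -> R)
    : naring :=
  @tower R R (fun h => h) [seq sigma i | i <- enum 'I_n].

(* Main.v *)
Require Import Defs.
From HB Require Import structures.
From mathcomp Require Import all_boot all_order all_algebra.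
From mathcomp Require Import finmap zify.
From mathcomp.multinomials Require Import monalg.
From Stdlib Require Import ClassicalEpsilon.
From Stdlib Require List.

Set Implicit Arguments.
Unset Strict Implicit.
Unset Printing Implicit Defensive.
Import GRing.Theory.
Local Open Scope ring_scope.

Definition good (S : naring) : Prop :=
  [/\ (forall x : S, namul (naone S) x = x), (forall x : S, namul x (naone S) = x),
      (forall x : S, namul x 0 = 0) & (forall x : S, namul 0 x = 0)].

Definition gmap (S : naring) (h : S -> S) : Prop :=
  [/\ h 0 = 0, bijective h & h (naone S) = naone S].

Lemma finvK (T : Type) (f : T -> T) : bijective f -> cancel f (Defs.finv f).
Proof.
move=> [g fg gf] x; apply: (can_inj fg); rewrite /Defs.finv.
by apply: (epsilon_spec (inhabits (f x)) (fun y => f y = f x)); exists x.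
Qed.

Lemma finvKV (T : Type) (f : T -> T) : bijective f -> cancel (Defs.finv f) f.
Proof.
move=> [g fg gf] y; rewrite /Defs.finv.
by apply: (epsilon_spec (inhabits y) (fun x => f x = y)); exists (g y).
Qed.

Lemma iter_cancel (T : Type) (f g : T -> T) n : cancel f g -> cancel (iter n f) (iter n g).
Proof.
move=> fg; elim: n => [//|n IH] x.
by rewrite iterSr iterS fg IH.
Qed.

Lemma zpowK (T : Type) (f : T -> T) (k : int) : bijective f ->
  cancel (zpow f k) (zpow f (- k)).
Proof.
move=> bf; case: k => [[|n]|n] //=.
  exact: iter_cancel (finvK bf).
exact: iter_cancel (finvKV bf).
Qed.

Lemma zpow_fix (T : Type) (f : T -> T) (k : int) (c : T) : bijective f -> f c = c ->
  zpow f k c = c.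
Proof.
move=> bf fc.
have fic : Defs.finv f c = c by rewrite -{1}fc finvK.
case: k => n /=; [elim: n => //= n ->| elim: n => /= [|n ->]]; by [].
Qed.

Section Gen.
Variable S : naring.
Notation T := (laurent_car S).

Lemma mcoeff_sum (Ix : Type) (s : seq Ix) (F : Ix -> T) m :
  (\sum_(i <- s) F i)@_m = \sum_(i <- s) (F i)@_m.
Proof.
elim: s => [|x s IH]; first by rewrite !big_nil mcoeff0.
by rewrite !big_cons mcoeffD IH.
Qed.

Lemma sum_delta (s : seq int) (F : int -> S) j0 : uniq s ->
  \sum_(j <- s) F j *+ (j == j0) = if j0 \in s then F j0 else 0.
Proof.
elim: s => [|x s IH] /=; first by rewrite big_nil.
move=> /andP [xs us]; rewrite big_cons IH // in_cons.
case: (eqVneq x j0) => [ex|nx] /=.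
  by rewrite -ex (negbTE xs) addr0.
by rewrite add0r.
Qed.

End Gen.
Section Coef.
Variable S : naring.
Variable tau : S -> S.
Hypothesis gS : good S.
Hypothesis gt : gmap tau.
Notation T := (laurent_car S).

Lemma zpow0 k : zpow tau k 0 = 0.
Proof. by case: gt => t0 bt _; apply: zpow_fix. Qed.

Lemma zpow1 k : zpow tau k (naone S) = naone S.
Proof. by case: gt => _ bt t1; apply: zpow_fix. Qed.

Lemma coefUl k (a : S) (g : T) m :
  (laurent_mul tau (mkmalgU k a) g)@_m = namul a (zpow tau k (g@_(m - k))).
Proof.
case: gS => g1l g1r gm0 g0m.
rewrite /laurent_mul msuppU; case: eqP => [->|a0].
  by rewrite big_seq_fset0 mcoeff0 g0m.
rewrite big_seq_fset1 mcoeff_sum mcoeffUU.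
under eq_bigr => j _ do rewrite mcoeffU.
have E : forall j, (k + j == m) = (j == m - k).
  by move=> j; apply/eqP/eqP; lia.
under eq_bigr => j _ do rewrite E.
rewrite sum_delta ?fset_uniq //.
case: ifP => // /negbT H.
by rewrite mcoeff_outdom // zpow0 gm0.
Qed.

Lemma coefUr k (a : S) (g : T) m :
  (laurent_mul tau g (mkmalgU k a))@_m = namul (g@_(m - k)) (zpow tau (m - k) a).
Proof.
case: gS => g1l g1r gm0 g0m.
rewrite /laurent_mul msuppU; case: eqP => [->|a0].
  rewrite big1 ?mcoeff0 ?zpow0 ?gm0 // => i _.
  by rewrite big_seq_fset0.
under eq_bigr => i _ do rewrite big_seq_fset1 mcoeffUU.
rewrite mcoeff_sum.
under eq_bigr => j _ do rewrite mcoeffU.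
have E : forall j, (j + k == m) = (j == m - k).
  by move=> j; apply/eqP/eqP; lia.
under eq_bigr => j _ do rewrite E.
rewrite (sum_delta (fun j => namul (g@_j) (zpow tau j a))) ?fset_uniq //.
case: ifP => // /negbT H.
by rewrite mcoeff_outdom // g0m.
Qed.

Lemma good_laurent : good (laurent tau).
Proof.
have [g1l g1r gm0 g0m] := gS.
split=> x /=; apply/malgP => m.
- by rewrite coefUl subr0 g1l.
- by rewrite coefUr subr0 zpow1 g1r.
- by rewrite mcoeff0 -(monalgU0 0) coefUr zpow0 gm0.
- by rewrite mcoeff0 -(monalgU0 0) coefUl g0m.
Qed.

End Coef.
Section Cmap.
Variable S : naring.
Notation T := (laurent_car S).

Lemma coefmapE (h : S -> S) (f : T) m : h 0 = 0 -> (coefmap h f)@_m = h (f@_m).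
Proof.
move=> h0; rewrite /coefmap mcoeff_sum.
under eq_bigr => j _ do rewrite mcoeffU.
rewrite (sum_delta (fun j => h (f@_j))) ?fset_uniq //.
by case: ifP => // /negbT H; rewrite mcoeff_outdom.
Qed.

Lemma gmap_coefmap (tau h : S -> S) : gmap h -> gmap (S := laurent tau) (coefmap h).
Proof.
case=> h0 [h' hh' h'h] h1.
have h'0 : h' 0 = 0 by rewrite -{1}h0 hh'.
split.
- by apply/malgP => m; rewrite coefmapE // !mcoeff0.
- by exists (coefmap h') => f; apply/malgP => m; rewrite !coefmapE // ?hh' ?h'h.
- apply/malgP => m /=; rewrite coefmapE // mcoeffU.
  by case: (_ == _) => /=; rewrite ?h1 ?h0.
Qed.

End Cmap.
Section Key.
Variable S : naring.
Notation T := (laurent_car S).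

Definition supp_in (d : nat) (f : T) :=
  forall m : int, (0 < m) || (m < - (d%:Z)) -> f@_m = 0.

Definition Ld (d : nat) (I : T -> Prop) (a : S) :=
  exists f, [/\ I f, supp_in d f & f@_0 = a].

Lemma seq_bound (s : seq int) : exists B : nat, forall m, m \in s -> (- B%:Z <= m) && (m <= B%:Z).
Proof.
elim: s => [|x s [B HB]]; first by exists 0%N.
exists (B + absz x)%N => m; rewrite in_cons => /orP [/eqP ->|/HB]; lia.
Qed.

Lemma fin_supp (g : T) : exists B : nat, forall m, (B%:Z < m) || (m < - B%:Z) -> g@_m = 0.
Proof.
have [B HB] := seq_bound (msupp g).
exists B => m Hm; apply: mcoeff_outdom; apply/negP => /HB; lia.
Qed.

Variable idT : (T -> Prop) -> Prop.
Variable sh : int -> T -> T.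
Hypothesis idT_add : forall I, idT I ->
  [/\ I 0, (forall x y, I x -> I y -> I (x + y)) & (forall x, I x -> I (- x))].
Hypothesis idT_sh : forall I k g, idT I -> I g -> I (sh k g).
Hypothesis sh_supp : forall k g m, g@_(m - k) = 0 -> (sh k g)@_m = 0.
Hypothesis shK : forall k g, sh (- k) (sh k g) = g.

Lemma key I J : idT I -> idT J -> (forall x, I x -> J x) ->
  (forall d a, Ld d J a -> Ld d I a) -> forall x, J x -> I x.
Proof.
move=> iI iJ IJ HL.
have [I0 IA IN] := idT_add iI.
have [J0 JA JN] := idT_add iJ.
have step : forall d g, J g -> supp_in d g -> exists f, [/\ I f, J (g - f) &
    forall m : int, (0 <= m) || (m < - (d%:Z)) -> (g - f)@_m = 0].
  move=> d g Jg sg.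
  have [f [If sf f0]] : Ld d I (g@_0) by apply: HL; exists g.
  exists f; split => //; first by apply: JA => //; apply/JN/IJ.
  move=> m Hm; rewrite mcoeffB.
  have [->|m0] := eqVneq m 0; first by rewrite f0 subrr.
  by rewrite sg ?sf ?subrr //; lia.
have main : forall d g, J g -> supp_in d g -> I g.
  elim=> [|d IH] g Jg sg; have [f [If Jgf Hgf]] := step _ g Jg sg.
    have -> : g = (g - f) + f by rewrite subrK.
    apply: IA => //; suff -> : g - f = 0 by [].
    by apply/malgP => m; rewrite mcoeff0 Hgf //; lia.
  have -> : g = (g - f) + f by rewrite subrK.
  apply: IA => //.
  rewrite -(shK 1 (g - f)); apply: idT_sh => //; apply: IH.
    exact: idT_sh.
  move=> m Hm; apply: sh_supp; apply: Hgf; lia.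
move=> g Jg; have [B HB] := fin_supp g.
rewrite -(shK (- B%:Z) g) opprK; apply: idT_sh => //.
apply: (main (B + B)%N); first exact: idT_sh.
by move=> m Hm; apply: sh_supp; apply: HB; lia.
Qed.

End Key.

Definition ACC (T : Type) (id : (T -> Prop) -> Prop) :=
  forall I : nat -> T -> Prop, (forall k, id (I k)) -> (forall k x, I k x -> I k.+1 x) ->
    exists N, forall k, (N <= k)%N -> forall x, I k x -> I N x.

Lemma chain_mono (T : Type) (I : nat -> T -> Prop) :
  (forall k x, I k x -> I k.+1 x) -> forall k1 k2, (k1 <= k2)%N -> forall x, I k1 x -> I k2 x.
Proof.
move=> HI k1 k2 /subnK <-; elim: (k2 - k1)%N => [//|n IH] x /IH.
by rewrite addSn; apply: HI.
Qed.

Lemma acc_transfer (S T : Type) (idS : (S -> Prop) -> Prop) (idT : (T -> Prop) -> Prop)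
  (L : nat -> (T -> Prop) -> S -> Prop) :
  (forall d I, idT I -> idS (L d I)) ->
  (forall d d' I a, (d <= d')%N -> L d I a -> L d' I a) ->
  (forall d I J a, (forall x, I x -> J x) -> L d I a -> L d J a) ->
  (forall I J, idT I -> idT J -> (forall x, I x -> J x) ->
     (forall d a, L d J a -> L d I a) -> forall x, J x -> I x) ->
  ACC idS -> ACC idT.
Proof.
move=> Lid Lmd LmI Lkey accS I idI incI.
have monI := chain_mono incI.
have Lm : forall d d' k k' a, (d <= d')%N -> (k <= k')%N -> L d (I k) a -> L d' (I k') a.
  move=> d d' k k' a dd kk H; apply: (Lmd d) => //; apply: LmI H; exact: monI.
have [p Hp] : exists p, forall k, (p <= k)%N -> forall a, L k (I k) a -> L p (I p) a.
  apply: (accS (fun k => L k (I k))) => [k|k a]; first exact: Lid.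
  by apply: Lm; exact: leqnSn.
have [M HM] : exists M, forall d, (d < p)%N -> forall k, (M <= k)%N ->
    forall a, L d (I k) a -> L d (I M) a.
  elim: p {Hp} => [|q [M HM]]; first by exists 0%N.
  have [Nq HNq] := accS (fun k => L q (I k)) (fun k => Lid q _ (idI k))
     (fun k a => Lm _ _ _ _ _ (leqnn q) (leqnSn k)).
  exists (maxn M Nq) => d; rewrite ltnS leq_eqVlt => /orP [/eqP ->|dq] k Hk a Ha.
    apply: (Lm q q Nq) => //; first by rewrite leq_maxr.
    apply: (HNq k) Ha; exact: leq_trans (leq_maxr _ _) Hk.
  apply: (Lm d d M) => //; first by rewrite leq_maxl.
  apply: (HM d dq k) Ha; exact: leq_trans (leq_maxl _ _) Hk.
exists (maxn p M) => k Hk; apply: Lkey => //; first by apply: monI.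
move=> d a Ha; have [dp|pd] := ltnP d p.
  apply: (Lm d d M) => //; first by rewrite leq_maxr.
  apply: (HM d dp k) Ha; exact: leq_trans (leq_maxr _ _) Hk.
have H1 : L (maxn d k) (I (maxn d k)) a by apply: Lm Ha; rewrite ?leq_maxl ?leq_maxr.
have H2 := Hp _ (leq_trans pd (leq_maxl _ _)) _ H1.
by apply: Lm H2 => //; rewrite leq_max leqnn.
Qed.
Section OneStep.
Variable S : naring.
Variable tau : S -> S.
Hypothesis gS : good S.
Hypothesis gt : gmap tau.
Notation T := (laurent_car S).

Lemma supp_mono d d' (f : T) : (d <= d')%N -> supp_in d f -> supp_in d' f.
Proof. by move=> dd H m Hm; apply: H; lia. Qed.

Lemma left_step : left_noetherian S -> left_noetherian (laurent tau).
Proof.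
have [g1l g1r gm0 g0m] := gS.
have zK : forall k, cancel (zpow tau k) (zpow tau (- k)).
  by move=> k; apply: zpowK; case: gt.
apply: (@acc_transfer S T _ _ (@Ld S)).
- move=> d I [[I0 IA IN] IM]; split; first split.
  + exists 0; split => //; last by rewrite mcoeff0.
    by move=> m _; rewrite mcoeff0.
  + move=> x y [f [If sf <-]] [g [Ig sg <-]]; exists (f + g); split.
    * exact: IA.
    * by move=> m Hm; rewrite mcoeffD sf ?sg ?addr0.
    * by rewrite mcoeffD.
  + move=> x [f [If sf <-]]; exists (- f); split.
    * exact: IN.
    * by move=> m Hm; rewrite mcoeffN sf ?oppr0.
    * by rewrite mcoeffN.
  + move=> r x [f [If sf <-]]; exists (laurent_mul tau (mkmalgU 0 r) f); split.
    * exact: (IM (mkmalgU 0 r)).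
    * by move=> m Hm; rewrite coefUl // subr0 sf ?gm0.
    * by rewrite coefUl // subr0.
- move=> d d' I a dd [f [If sf fa]]; exists f; split => //; exact: supp_mono sf.
- by move=> d I J a IJ [f [If sf fa]]; exists f; split => //; apply: IJ.
- move=> I J iI iJ; apply: (@key S (@left_ideal (laurent tau)) (fun k g => laurent_mul tau (mkmalgU k (naone S)) g)).
  + by move=> I' [[? ? ?] _]; split.
  + by move=> I' k g [_ IM] Ig; apply: (IM (mkmalgU k (naone S))).
  + by move=> k g m H; rewrite coefUl // H zpow0 // gm0.
  + move=> k g; apply/malgP => m; rewrite !coefUl // !g1l zK.
    by rewrite opprK addrK.
  + exact: iI.
  + exact: iJ.
Qed.

Lemma right_step : right_noetherian S -> right_noetherian (laurent tau).
Proof.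
have [g1l g1r gm0 g0m] := gS.
apply: (@acc_transfer S T _ _ (@Ld S)).
- move=> d I [[I0 IA IN] IM]; split; first split.
  + exists 0; split => //; last by rewrite mcoeff0.
    by move=> m _; rewrite mcoeff0.
  + move=> x y [f [If sf <-]] [g [Ig sg <-]]; exists (f + g); split.
    * exact: IA.
    * by move=> m Hm; rewrite mcoeffD sf ?sg ?addr0.
    * by rewrite mcoeffD.
  + move=> x [f [If sf <-]]; exists (- f); split.
    * exact: IN.
    * by move=> m Hm; rewrite mcoeffN sf ?oppr0.
    * by rewrite mcoeffN.
  + move=> r x [f [If sf <-]]; exists (laurent_mul tau f (mkmalgU 0 r)); split.
    * exact: (IM (mkmalgU 0 r)).
    * by move=> m Hm; rewrite coefUr // subr0 sf ?g0m.
    * by rewrite coefUr // subr0.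
- move=> d d' I a dd [f [If sf fa]]; exists f; split => //; exact: supp_mono sf.
- by move=> d I J a IJ [f [If sf fa]]; exists f; split => //; apply: IJ.
- move=> I J iI iJ; apply: (@key S (@right_ideal (laurent tau)) (fun k g => laurent_mul tau g (mkmalgU k (naone S)))).
  + by move=> I' [[? ? ?] _]; split.
  + by move=> I' k g [_ IM] Ig; apply: (IM (mkmalgU k (naone S))).
  + by move=> k g m H; rewrite coefUr // H g0m.
  + move=> k g; apply/malgP => m; rewrite !coefUr // !zpow1 // !g1r.
    by rewrite opprK addrK.
  + exact: iI.
  + exact: iJ.
Qed.

End OneStep.
Lemma tower_ok (R : naring) (s : seq (R -> R)) : forall (S : naring) (lift : (R -> R) -> S -> S),
  good S -> (forall x, List.In x s -> gmap (lift x)) ->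
  (left_noetherian S -> left_noetherian (tower lift s)) /\
  (right_noetherian S -> right_noetherian (tower lift s)).
Proof.
elim: s => [|sg s IH] S lift gS hl /=; first by [].
have gl : gmap (lift sg) by apply: hl; left.
have [IHl IHr] := IH (laurent (lift sg)) (fun h => coefmap (lift h))
  (good_laurent gS gl) (fun x Hx => gmap_coefmap (lift sg) (hl x (or_intror Hx))).
split=> H.
- exact/IHl/left_step.
- exact/IHr/right_step.
Qed.

Theorem corollary11 (R : naring) (n : nat) (sigma : 'I_n -> R -> R) :
  is_naring R ->
  (forall i (x y : R), sigma i (x + y)%R = (sigma i x + sigma i y)%R) ->
  (forall i, bijective (sigma i)) ->
  (forall i, sigma i (naone R) = naone R) ->
  (forall i j (x : R), sigma i (sigma j x) = sigma j (sigma i x)) ->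
  (left_noetherian R -> left_noetherian (iterated_laurent sigma)) /\
  (right_noetherian R -> right_noetherian (iterated_laurent sigma)).
Proof.
move=> [dl dr u1l u1r] sadd sbij s1 _.
apply: tower_ok.
- split => // x.
  + have h := dl x 0 0; rewrite addr0 in h.
    by apply: (addrI (namul x 0)); rewrite addr0 -h.
  + have h := dr 0 0 x; rewrite addr0 in h.
    by apply: (addrI (namul 0 x)); rewrite addr0 -h.
- move=> x /List.in_map_iff [i [<- _]]; split => //.
  have h := sadd i 0 0; rewrite addr0 in h.
  by apply: (addrI (sigma i 0)); rewrite addr0 -h.
Qed.
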